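(* For every index $\mathbf k$ of depth $r$, \[\sum_{i=0}^{r}(-1)^i\,\zeta^{t,*}_{\mathrm{shift}}(\overleftarrow{\mathbf k_{[i]}};T)\,\zeta^{t,\star,*}_{\mathrm{shift}}(\mathbf k^{[i]};T)=\delta_{0,r},\] where $\delta$ is Kronecker's delta.
   Context: $t,T$ are commuting indeterminates. An index is a finite tuple $\mathbf{k}=(k_1,\dots,k_r)$ of positive integers ($r\ge0$), $\mathrm{dep}(\mathbf k)=r$, $\mathrm{wt}(\mathbf k)=\sum k_i$; $\mathbf{k}_{[i]}=(k_1,\dots,k_i)$, $\mathbf{k}^{[i]}=(k_{i+1},\dots,k_r)$, $\overleftarrow{\mathbf{k}}=(k_r,\dots,k_1)$; $\oplus$ is componentwise sum and $b\binom{\mathbf{k}}{\mathbf{l}}=\prod_{i}\binom{k_i+l_i-1}{l_i}$. $\zeta^*(\mathbf k;T)$ is the harmonic regularized polynomial: with $\mathfrak H=\mathbb Q\langle e_0,e_1\rangle$, $e_{\mathbf{k}}=e_1e_0^{k_1-1}\cdots e_1e_0^{k_r-1}$, $Z^*_T$ the unique $\mathbb Q$-algebra homomorphism $(\mathbb Q+e_1\mathfrak H,* )\to\mathbb R[T]$ (harmonic product $*$) with $Z^*_T(e_{\mathbf k})=(-1)^{\mathrm{dep}}\zeta(\mathbf k)$ for admissible $\mathbf k$ (empty or $k_r\ge2$, $\zeta$ the MZV) and $Z^*_T(e_1)=-T$, $\zeta^*(\mathbf k;T)=(-1)^{\mathrm{dep}(\mathbf k)}Z^*_T(e_{\mathbf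 k})$. $\zeta^{t,*}_{\mathrm{shift}}(\mathbf{k};T)=\sum_{\mathbf n\in\mathbb Z_{\ge0}^{\mathrm{dep}(\mathbf k)}}b\binom{\mathbf k}{\mathbf n}\zeta^{*}(\mathbf k\oplus\mathbf n;T)(-t)^{\mathrm{wt}(\mathbf n)}$. $\mathbf l\preceq\mathbf k$ means $\mathbf l$ is obtained from $(k_1\circ\cdots\circ k_r)$ by replacing each $\circ$ by a comma or a plus sign ($\varnothing\preceq\varnothing$), and $\zeta^{t,\star,*}_{\mathrm{shift}}(\mathbf k;T)=\sum_{\mathbf l\preceq\mathbf k}\zeta^{t,*}_{\mathrm{shift}}(\mathbf l;T)$. *)

(* Defs.v *)
From HB Require Import structures.
From mathcomp Require Import all_boot all_order all_algebra.
From mathcomp Require Import all_classical all_reals topology normedtype sequences.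
Set Implicit Arguments. Unset Strict Implicit. Unset Printing Implicit Defensive.
Import Order.TTheory GRing.Theory Num.Theory numFieldNormedType.Exports.
Local Open Scope ring_scope.

Definition is_index (k : seq nat) : bool := all (fun x => (0 < x)%N) k.

Definition admissible (k : seq nat) : bool :=
  (k == [::]) || (1 < last 0%N k)%N.

Section Zeta.
Variable R : realType.

(* sum over m < n_1 < ... < n_r < N of prod n_i^{-k_i} *)
Fixpoint zeta_trunc_from (k : seq nat) (m N : nat) : R :=
  match k with
  | [::] => 1
  | a :: k' => \sum_(m.+1 <= n < N) (n%:R ^- a) * zeta_trunc_from k' n N
  end.

Definition zeta_trunc (k : seq nat) (N : nat) : R := zeta_trunc_from k 0 N.

(* multiple zeta value zeta(k) = sum_{0<n_1<...<n_r} 1/(n_1^k_1 ... n_r^k_r)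
   (convergent for admissible k) *)
Definition mzv (k : seq nat) : R := limn (zeta_trunc k : R^nat).
End Zeta.

(* harmonic (stuffle) product of two indices, as a list of indices with
   multiplicity *)
Fixpoint stuffle (k : seq nat) : seq nat -> seq (seq nat) :=
  match k with
  | [::] => fun l => [:: l]
  | a :: k' =>
    fix st (l : seq nat) : seq (seq nat) :=
      match l with
      | [::] => [:: a :: k']
      | b :: l' => map (cons a) (stuffle k' l) ++ map (cons b) (st l')
                   ++ map (cons (a + b)%N) (stuffle k' l')
      end
  end.

(* Z : index -> R[T] is the harmonic regularized polynomial zeta^*(.;T):
   the image under (-1)^dep Z^*_T of the algebra homomorphism
   (Q + e_1 H, * ) -> R[T] with Z^*_T(e_k) = (-1)^dep zeta(k) for admissible k
   and Z^*_T(e_1) = -T. *)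
Definition harmonic_regularization (R : realType) (Z : seq nat -> {poly R}) :=
  [/\ forall k, is_index k -> admissible k -> Z k = (mzv R k)%:P,
      Z [:: 1%N] = 'X &
      forall k l, is_index k -> is_index l ->
        Z k * Z l = \sum_(m <- stuffle k l) Z m].

Fixpoint weak_comps (r m : nat) : seq (seq nat) :=
  match r with
  | 0%N => if m == 0%N then [:: [::]] else [::]
  | r'.+1 => flatten [seq map (cons j) (weak_comps r' (m - j)) | j <- iota 0 m.+1]
  end.

Definition bbin (k n : seq nat) : nat :=
  \prod_(p <- zip k n) 'C(p.1 + p.2 - 1, p.2).

Definition oplus (k n : seq nat) : seq nat := [seq p.1 + p.2 | p <- zip k n]%N.

(* Formal power series in t with coefficients in R[T]: coefficient sequence. *)
Definition pseries (R : realType) := nat -> {poly R}.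

Definition pmul (R : realType) (f g : pseries R) : pseries R :=
  fun m => \sum_(j < m.+1) f j * g (m - j)%N.

(* zeta^{t,*}_shift(k;T) = sum_n b(k;n) zeta^*(k (+) n;T) (-t)^{wt n} *)
Definition zeta_shift (R : realType) (Z : seq nat -> {poly R}) (k : seq nat)
  : pseries R :=
  fun m => (-1) ^+ m *
    \sum_(n <- weak_comps (size k) m) (bbin k n)%:R *: Z (oplus k n).

(* all l with l \preceq k (each choice of ',' / '+' for the gaps) *)
Fixpoint coarsenings (k : seq nat) : seq (seq nat) :=
  match k with
  | [::] => [:: [::]]
  | a :: k' =>
    match k' with
    | [::] => [:: [:: a]]
    | _ => flatten [seq [:: a :: l; (a + head 0 l)%N :: behead l]
                   | l <- coarsenings k']
    end
  end.

Definition zeta_shift_star (R : realType) (Z : seq nat -> {poly R})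
  (k : seq nat) : pseries R :=
  fun m => \sum_(l <- coarsenings k) zeta_shift Z l m.

(* Main.v *)
Require Import Defs.
From HB Require Import structures.
From mathcomp Require Import all_boot all_order all_algebra.
From mathcomp Require Import all_classical all_reals topology normedtype sequences.
Import Order.TTheory GRing.Theory Num.Theory.
Set Implicit Arguments. Unset Strict Implicit. Unset Printing Implicit Defensive.
Local Open Scope ring_scope.
Lemma stuffle_cc a x b y : stuffle (a::x) (b::y) =
  map (cons a) (stuffle x (b::y)) ++ map (cons b) (stuffle (a::x) y)
  ++ map (cons (a+b)%N) (stuffle x y).
Proof. by []. Qed.
Lemma stuffle_x0 x : stuffle x [::] = [:: x].
Proof. by case: x. Qed.

Definition wsum (A : zmodType) (Y : seq nat -> A) x y :=
  \sum_(w <- stuffle x y) Y w.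

Lemma wsum0x (A : zmodType) (Y : seq nat -> A) y : wsum Y [::] y = Y y.
Proof. by rewrite /wsum /= big_seq1. Qed.
Lemma wsumx0 (A : zmodType) (Y : seq nat -> A) x : wsum Y x [::] = Y x.
Proof. by rewrite /wsum stuffle_x0 big_seq1. Qed.
Lemma wsum_cc (A : zmodType) (Y : seq nat -> A) a x b y :
  wsum Y (a::x) (b::y) = wsum (fun w => Y (a :: w)) x (b::y)
    + wsum (fun w => Y (b :: w)) (a::x) y
    + wsum (fun w => Y ((a + b)%N :: w)) x y.
Proof. by rewrite /wsum stuffle_cc !big_cat /= !big_map addrA. Qed.

Definition G (A : zmodType) (F : seq nat -> A) u m :=
  \sum_(n <- weak_comps (size u) m) F (oplus u n) *+ bbin u n.

Definition cb a i := 'C(a + i - 1, i).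

Lemma G_nil (A : zmodType) (F : seq nat -> A) m :
  G F [::] m = if m == 0%N then F [::] else 0.
Proof.
rewrite /G /=; case: eqP => _; last by rewrite big_nil.
by rewrite big_seq1 /bbin /= big_nil mulr1n.
Qed.

Lemma weak_comps_S r m : weak_comps r.+1 m =
  flatten [seq map (cons j) (weak_comps r (m - j)) | j <- iota 0 m.+1].
Proof. by []. Qed.

Lemma G_cons (A : zmodType) (F : seq nat -> A) a u m :
  G F (a :: u) m =
  \sum_(i < m.+1) G (fun x => F ((a + i)%N :: x)) u (m - i)%N *+ cb a i.
Proof.
rewrite /G [size _]/= weak_comps_S big_flatten big_map.
have -> : iota 0 m.+1 = index_iota 0 m.+1 by rewrite /index_iota subn0.
rewrite big_mkord.
apply: eq_bigr => i _; rewrite big_map -sumrMnl; apply: eq_bigr => n _.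
by rewrite /bbin /= big_cons mulnC mulrnA.
Qed.

Lemma G_add (A : zmodType) (F1 F2 : seq nat -> A) u m :
  G (fun x => F1 x + F2 x) u m = G F1 u m + G F2 u m.
Proof. by rewrite /G -big_split; apply: eq_bigr => n _; rewrite mulrnDl. Qed.

Lemma G_sum (A : zmodType) (I : Type) (r : seq I) (F : I -> seq nat -> A) u m :
  G (fun x => \sum_(i <- r) F i x) u m = \sum_(i <- r) G (F i) u m.
Proof.
rewrite /G exchange_big; apply: eq_bigr => n _; by rewrite sumrMnl.
Qed.

Lemma G_muln (A : zmodType) (F : seq nat -> A) c u m :
  G (fun x => F x *+ c) u m = G F u m *+ c.
Proof.
rewrite /G -sumrMnl; apply: eq_bigr => n _; by rewrite mulrnAC.
Qed.

Lemma G_zero (A : zmodType) u m : G (fun _ => (0 : A)) u m = 0.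
Proof. by rewrite /G big1 // => n _; rewrite mul0rn. Qed.

Lemma eq_G (A : zmodType) (F1 F2 : seq nat -> A) :
  (forall x, F1 x = F2 x) -> forall u m, G F1 u m = G F2 u m.
Proof. by move=> e u m; apply: eq_bigr => n _; rewrite e. Qed.
From mathcomp Require Import zify.
Local Open Scope nat_scope.
Lemma vdm0 a b q : \sum_(i < q.+1) 'C(a + i, i) * 'C(b + (q - i), q - i)
   = 'C(a + b + q.+1, q).
Proof.
elim: q b => [|q IHq] b.
  by rewrite big_ord_recl big_ord0 !bin0.
elim: b => [|b IHb].
  have H1 := IHq 0.
  have E : forall i : 'I_q.+1, 'C(a + i, i) * 'C(0 + (q - i), q - i) = 'C(a+i,i).
    by move=> i; rewrite add0n binn muln1.
  rewrite (eq_bigr _ (fun i _ => E i)) in H1.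
  rewrite big_ord_recr /= subnn addn0 bin0 muln1.
  have E2 : forall i : 'I_q.+1, 'C(a + i, i) * 'C(0 + (q.+1 - i), q.+1 - i) = 'C(a+i,i).
    by move=> i; rewrite add0n binn muln1.
  rewrite (eq_bigr _ (fun i _ => E2 i)) H1.
  have -> : a + 0 + q.+2 = (a + q.+1).+1 by lia.
  by rewrite binS addnC addn0 addnS.
rewrite big_ord_recr /= subnn addn0 !bin0 muln1.
have E : forall i : 'I_q.+1, 'C(a + i, i) * 'C(b.+1 + (q.+1 - i), q.+1 - i) =
   'C(a + i, i) * 'C(b + (q.+1 - i), q.+1 - i) + 'C(a + i, i) * 'C(b.+1 + (q - i), q - i).
  move=> [i /= hi]; rewrite -mulnDr; congr (_ * _).
  have -> : q.+1 - i = (q - i).+1 by lia.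
  by rewrite addnS binS addSn addnS.
rewrite (eq_bigr _ (fun i _ => E i)) big_split /= IHq addnAC.
have := IHb; rewrite big_ord_recr /= subnn addn0 bin0 muln1 => ->.
have -> : a + b.+1 + q.+2 = (a + b + q.+2).+1 by lia.
rewrite binS; congr (_ + _); congr 'C(_, _); lia.
Qed.

Lemma cb_vdm a b q : \sum_(i < q.+1) cb a i * cb b (q - i) = cb (a + b) q.
Proof.
rewrite /cb; case: a => [|a].
  rewrite big_ord_recl /= addn0 subn0 bin0 mul1n big1 ?addn0 // => i _.
  by rewrite add0n bin_small ?mul0n //= subn1 /=.
case: b => [|b].
  rewrite big_ord_recr /= subnn addn0 bin0 muln1 addn0 big1 ?add0n // => [[i hi]] _ /=.
  rewrite add0n (@bin_small (q - i - 1)) ?muln0 //; lia.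
have E : forall i : 'I_q.+1, 'C(a.+1 + i - 1, i) * 'C(b.+1 + (q - i) - 1, q - i) =
   'C(a + i, i) * 'C(b + (q - i), q - i).
  by move=> i; rewrite !addSn !subn1.
rewrite (eq_bigr _ (fun i _ => E i)) vdm0; congr 'C(_, _); lia.
Qed.

Lemma tri1 (A : zmodType) (f : nat -> nat -> A) m :
  (\sum_(j < m.+1) \sum_(i < (m - j)%N.+1) f j i =
   \sum_(i < m.+1) \sum_(j < (m - i)%N.+1) f j i)%R.
Proof.
have E : forall j : 'I_m.+1, (\sum_(i < (m - j)%N.+1) f j i =
     \sum_(i < m.+1) if (j + i <= m)%N then f j i else 0)%R.
  move=> [j hj] /=; rewrite -big_mkcond /=.
  rewrite (big_ord_widen m.+1 (f j)) /=; last lia.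
  by apply: eq_bigl => i; apply/idP/idP; lia.
have E' : forall i : 'I_m.+1, (\sum_(j < (m - i).+1) f j i =
     \sum_(j < m.+1) if (j + i <= m)%N then f j i else 0)%R.
  move=> [i hi] /=; rewrite -big_mkcond /=.
  rewrite (big_ord_widen m.+1 (fun j => f j i)) /=; last lia.
  by apply: eq_bigl => j; apply/idP/idP; lia.
rewrite (eq_bigr _ (fun j _ => E j)) (eq_bigr _ (fun i _ => E' i)).
exact: exchange_big.
Qed.

Lemma tri2 (A : zmodType) (f : nat -> nat -> A) m :
  (\sum_(j < m.+1) \sum_(i < j.+1) f i (j - i)%N =
   \sum_(i < m.+1) \sum_(k < (m - i)%N.+1) f i k)%R.
Proof.
elim: m => [|m IH].
  by rewrite !big_ord_recl !big_ord0.
rewrite big_ord_recr /= IH [in RHS]big_ord_recr /= subnn.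
rewrite [X in (_ + X)%R = _]big_ord_recr /= subnn big_ord1.
rewrite GRing.addrA; congr (_ + _)%R.
have E : forall i : 'I_m.+1, (\sum_(k < (m.+1 - i).+1) f i k =
    \sum_(k < (m - i).+1) f i k + f i (m.+1 - i)%N)%R.
  move=> [i hi] /=; have -> : (m.+1 - i).+1 = (m - i).+2 by lia.
  rewrite big_ord_recr /=; congr (_ + f _ _)%R; lia.
by rewrite (eq_bigr _ (fun i _ => E i)) big_split.
Qed.

Local Open Scope ring_scope.
Definition Rest (A : zmodType) (Y : seq nat -> A) c x y :=
  match y with
  | [::] => 0
  | d :: y' => wsum (fun w => Y (d :: w)) (c :: x) y'
               + wsum (fun w => Y ((c + d)%N :: w)) x y'
  end.

Lemma wsum_split (A : zmodType) (Y : seq nat -> A) c x y :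
  wsum Y (c :: x) y = wsum (fun w => Y (c :: w)) x y + Rest Y c x y.
Proof.
case: y => [|d y] /=; first by rewrite !wsumx0 addr0.
by rewrite wsum_cc addrA.
Qed.

Lemma sum_G_cons (A : zmodType) (Y : seq nat -> A) c s m :
  \sum_(w <- s) G Y (c :: w) m =
  \sum_(i < m.+1) (\sum_(w <- s) G (fun x => Y ((c + i)%N :: x)) w (m - i)%N) *+ cb c i.
Proof.
under eq_bigr do rewrite G_cons.
rewrite exchange_big; refine (eq_bigr _ _); move=> i _; by rewrite sumrMnl.
Qed.

Definition K2 (A : zmodType) (Y : seq nat -> A) a b u v i2 i1 j1 k :=
  G (fun x => G (fun y => wsum (fun w => Y ((b + i2)%N :: w)) ((a + i1)%N :: x) y) v k) u j1.
Definition K3 (A : zmodType) (Y : seq nat -> A) a b u v q j1 k :=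
  G (fun x => G (fun y => wsum (fun w => Y ((a + b + q)%N :: w)) x y) v k) u j1.

Lemma G_sumn (A : zmodType) (Q : nat -> seq nat -> A) (c : nat -> nat) n u k :
  G (fun x => \sum_(i < n) Q i x *+ c i) u k = \sum_(i < n) G (Q i) u k *+ c i.
Proof.
rewrite /G; transitivity (\sum_(w <- weak_comps (size u) k) \sum_(i < n)
   Q i (oplus u w) *+ c i *+ bbin u w).
  by refine (eq_bigr _ _); move=> w _; rewrite -sumrMnl.
rewrite exchange_big; refine (eq_bigr _ _); move=> i _; rewrite -sumrMnl.
by refine (eq_bigr _ _); move=> w _; rewrite mulrnAC.
Qed.

Lemma G_lin3 (A : zmodType) (P : seq nat -> A) (Q S : nat -> seq nat -> A)
   (c : nat -> nat) n u k :
  G (fun x => P x + \sum_(i2 < n) (Q i2 x + S i2 x) *+ c i2) u k =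
  G P u k + \sum_(i2 < n) G (Q i2) u k *+ c i2 + \sum_(i2 < n) G (S i2) u k *+ c i2.
Proof.
transitivity (G P u k + G (fun x => \sum_(i2 < n) (Q i2 x + S i2 x) *+ c i2) u k).
  rewrite /G -big_split; refine (eq_bigr _ _); move=> w _; by rewrite mulrnDl.
rewrite (G_sumn (fun i x => Q i x + S i x)) -addrA -big_split /=; congr (_ + _).
refine (eq_bigr _ _); move=> i _; rewrite -mulrnDl; congr (_ *+ _).
rewrite /G -big_split; refine (eq_bigr _ _); move=> w _; by rewrite mulrnDl.
Qed.

Lemma LHS_split (A : zmodType) (Y : seq nat -> A) a u b v m :
  \sum_(j < m.+1) G (fun x => G (fun y => wsum Y x y) (b :: v) (m - j)%N) (a :: u) j =
  \sum_(j < m.+1) \sum_(i1 < j.+1)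
     G (fun x => G (fun y => wsum (fun w => Y ((a + i1)%N :: w)) x y) (b :: v) (m - j)%N)
       u (j - i1)%N *+ cb a i1
  + \sum_(j < m.+1) \sum_(i1 < j.+1) \sum_(i2 < (m - j)%N.+1)
      K2 Y a b u v i2 i1 (j - i1)%N (m - j - i2)%N *+ cb b i2 *+ cb a i1
  + \sum_(j < m.+1) \sum_(i1 < j.+1) \sum_(i2 < (m - j)%N.+1)
      K3 Y a b u v (i1 + i2)%N (j - i1)%N (m - j - i2)%N *+ cb b i2 *+ cb a i1.
Proof.
rewrite -!big_split /=.
apply: eq_bigr; move=> j _; rewrite G_cons -!big_split /=.
refine (eq_bigr _ _); move=> i1 _.

rewrite (@eq_G _ _ (fun x =>
   G (fun y => wsum (fun w => Y ((a + i1)%N :: w)) x y) (b :: v) (m - j)%N +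
   \sum_(i2 < (m - j)%N.+1)
     (G (fun y => wsum (fun w => Y ((b + i2)%N :: w)) ((a + i1)%N :: x) y) v (m - j - i2)%N +
      G (fun y => wsum (fun w => Y ((a + b + (i1 + i2))%N :: w)) x y) v (m - j - i2)%N)
     *+ cb b i2)); last first.
  move=> x; rewrite (eq_G (fun y => wsum_split Y (a + i1) x y)) G_add.
  congr (_ + _); rewrite G_cons; refine (eq_bigr _ _); move=> i2 _ /=; rewrite G_add.
  have -> : (a + i1 + (b + i2) = a + b + (i1 + i2))%N by rewrite addnACA.
  by [].
rewrite (G_lin3 (fun x => G (fun y => wsum (fun w => Y ((a + i1)%N :: w)) x y) (b :: v) (m - j)%N)
  (fun i2 x => G (fun y => wsum (fun w => Y ((b + i2)%N :: w)) ((a + i1)%N :: x) y) v (m - j - i2)%N)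
  (fun i2 x => G (fun y => wsum (fun w => Y ((a + b + (i1 + i2))%N :: w)) x y) v (m - j - i2)%N)
  (cb b)).
rewrite !mulrnDl -!sumrMnl.
congr (_ + _ + _); refine (eq_bigr _ _); move=> i2 _ //.
Qed.
Lemma L1 (A : zmodType) u : forall v m (Y : seq nat -> A),
  \sum_(j < m.+1) G (fun x => G (fun y => wsum Y x y) v (m - j)%N) u j
  = \sum_(w <- stuffle u v) G Y w m.
Proof.
elim: u => [|a u IHu] v m Y.
  rewrite big_ord_recl G_nil /= big1 ?addr0; last by move=> j _; rewrite G_nil.
  rewrite subn0 big_seq1; apply: eq_G => y; exact: wsum0x.
elim: v m Y => [|b v IHv] m Y.
  rewrite stuffle_x0 big_seq1 big_ord_recr /= subnn big1 ?add0r.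
    apply: eq_G => x; rewrite G_nil /=; exact: wsumx0.
  move=> [j hj] _ /=; rewrite (@eq_G _ _ (fun _ => 0)); first exact: G_zero.
  move=> x; rewrite G_nil; have /negbTE -> : (m - j != 0)%N by lia.
  by [].
rewrite LHS_split stuffle_cc !big_cat !big_map /= -/(stuffle (a :: u) v) !sum_G_cons addrA.
congr (_ + _ + _).
- transitivity (\sum_(i < m.+1) (\sum_(j < (m - i)%N.+1)
     G (fun x => G (fun y => wsum (fun w => Y ((a + i)%N :: w)) x y) (b :: v) (m - i - j)%N) u j)
     *+ cb a i); last first.
    by refine (eq_bigr _ _); move=> i _; rewrite IHu.
  pose f i k := G (fun x => G (fun y => wsum (fun w => Y ((a + i)%N :: w)) x y) (b :: v)
     (m - (i + k))%N) u k *+ cb a i.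
  transitivity (\sum_(j < m.+1) \sum_(i < j.+1) f i (j - i)%N).
    refine (eq_bigr _ _); move=> j _; refine (eq_bigr _ _); move=> i _.
    by rewrite /f subnKC // -ltnS ltn_ord.
  rewrite tri2; refine (eq_bigr _ _); move=> i _; rewrite -sumrMnl.
  by refine (eq_bigr _ _); move=> k _; rewrite /f subnDA.
- transitivity (\sum_(j < m.+1) \sum_(i2 < (m - j)%N.+1) \sum_(i1 < j.+1)
      K2 Y a b u v i2 i1 (j - i1)%N (m - j - i2)%N *+ cb b i2 *+ cb a i1).
    by refine (eq_bigr _ _); move=> j _; rewrite exchange_big.
  pose f (j i2 : nat) := \sum_(i1 < j.+1)
      K2 Y a b u v i2 i1 (j - i1)%N (m - j - i2)%N *+ cb b i2 *+ cb a i1.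
  transitivity (\sum_(j < m.+1) \sum_(i2 < (m - j)%N.+1) f j i2); first by [].
  rewrite tri1; refine (eq_bigr _ _); move=> i2 _.
  rewrite -IHv -sumrMnl; refine (eq_bigr _ _); move=> j _.
  rewrite G_cons -sumrMnl /f; refine (eq_bigr _ _); move=> i1 _.
  by rewrite mulrnAC /K2 (subnAC m j i2).
- pose K q j1 k := K3 Y a b u v q j1 k.
  transitivity (\sum_(j1 < m.+1) \sum_(q < (m - j1)%N.+1)
      K q j1 (m - j1 - q)%N *+ cb (a + b) q); last first.
    pose g (q j1 : nat) := K q j1 (m - q - j1)%N *+ cb (a + b) q.
    transitivity (\sum_(q < m.+1) \sum_(j1 < (m - q)%N.+1) g q j1).
      transitivity (\sum_(j1 < m.+1) \sum_(q < (m - j1)%N.+1) g q j1).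
        refine (eq_bigr _ _); move=> j1 _; refine (eq_bigr _ _); move=> q _.
        by rewrite /g /K (subnAC m q j1).
      exact: (esym (tri1 g m)).
    refine (eq_bigr _ _); move=> q _.
    by rewrite -IHu -sumrMnl.
  pose g2 (i1 j1 : nat) := \sum_(i2 < (m - (i1 + j1))%N.+1)
      K (i1 + i2)%N j1 (m - (i1 + j1) - i2)%N *+ cb b i2 *+ cb a i1.
  transitivity (\sum_(j < m.+1) \sum_(i1 < j.+1) g2 i1 (j - i1)%N).
    refine (eq_bigr _ _); move=> j _; refine (eq_bigr _ _); move=> i1 _.
    by rewrite /g2 subnKC // -ltnS ltn_ord.
  rewrite tri2.
  transitivity (\sum_(j1 < m.+1) \sum_(i1 < (m - j1)%N.+1) g2 i1 j1).
    exact: (tri1 g2 m).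
  refine (eq_bigr _ _); move=> j1 _.
  set M := (m - j1)%N.
  pose h (i1 i2 : nat) := K (i1 + i2)%N j1 (M - (i1 + i2))%N *+ (cb a i1 * cb b i2).
  transitivity (\sum_(i1 < M.+1) \sum_(i2 < (M - i1)%N.+1) h i1 i2).
    refine (eq_bigr _ _); move=> i1 _; rewrite /g2.
    have -> : (m - (i1 + j1) = M - i1)%N by rewrite /M; lia.
    refine (eq_bigr _ _); move=> i2 _.
    by rewrite /h mulrnA mulrnAC subnDA.
  rewrite -tri2; refine (eq_bigr _ _); move=> q _.
  rewrite -cb_vdm -sumrMnr; refine (eq_bigr _ _); move=> i1 _.
  by rewrite /h subnKC // -ltnS ltn_ord.
Qed.
Lemma zs_G (R : realType) (Z : seq nat -> {poly R}) w m :
  zeta_shift Z w m = (-1) ^+ m * G Z w m.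
Proof.
rewrite /zeta_shift /G; congr (_ * _).
by apply: eq_bigr => n _; rewrite scaler_nat.
Qed.

Lemma idx_oplus u n : is_index u -> is_index (oplus u n).
Proof.
elim: u n => [|a u IH] [|j n] //= /andP[ha hu].
by rewrite /is_index /= ltn_addr //; apply: IH.
Qed.

Lemma G_eq_idx (A : zmodType) (F1 F2 : seq nat -> A) u m :
  is_index u -> (forall x, is_index x -> F1 x = F2 x) -> G F1 u m = G F2 u m.
Proof.
move=> hu e; apply: eq_bigr => n _; rewrite e //; exact: idx_oplus.
Qed.

Lemma GG (A : comRingType) (Z : seq nat -> A) u v j k :
  G Z u j * G Z v k = G (fun x => G (fun y => Z x * Z y) v k) u j.
Proof.
rewrite /G mulr_suml; apply: eq_bigr => n _; rewrite mulrnAl mulr_sumr.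
congr (_ *+ _); apply: eq_bigr => p _; by rewrite mulrnAr.
Qed.

Lemma Hhom (R : realType) (Z : seq nat -> {poly R})
  (HZmul : forall k l, is_index k -> is_index l -> Z k * Z l = \sum_(w <- stuffle k l) Z w)
  u v m : is_index u -> is_index v ->
  pmul (zeta_shift Z u) (zeta_shift Z v) m = \sum_(w <- stuffle u v) zeta_shift Z w m.
Proof.
move=> hu hv; rewrite /pmul.
transitivity ((-1) ^+ m * \sum_(j < m.+1) G Z u j * G Z v (m - j)%N).
  rewrite mulr_sumr; apply: eq_bigr => j _; rewrite !zs_G mulrACA -exprD subnKC //.
  by rewrite -ltnS ltn_ord.
transitivity ((-1) ^+ m * \sum_(w <- stuffle u v) G Z w m); last first.
  by rewrite mulr_sumr; apply: eq_bigr => w _; rewrite zs_G.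
congr (_ * _); rewrite -L1; apply: eq_bigr => j _; rewrite GG.
apply: G_eq_idx => // x hx; apply: G_eq_idx => // y hy; exact: HZmul.
Qed.
Definition Tsum (A : zmodType) (Y : seq nat -> A) x y :=
  \sum_(l <- coarsenings y) wsum Y x l.
Definition Wsum (A : zmodType) (Y : seq nat -> A) x y :=
  \sum_(l <- coarsenings y) wsum (fun w => Y (head 0%N l :: w)) x (behead l).

Lemma coars_cons a y : y != [::] ->
  coarsenings (a :: y) =
  flatten [seq [:: a :: l; (a + head 0 l)%N :: behead l] | l <- coarsenings y].
Proof. by case: y. Qed.

Lemma coars_nil y l : l \in coarsenings y -> y != [::] -> l != [::].
Proof.
case: y => [|a y] // + _; case: (eqVneq y [::]) => [->|hy].
  by rewrite /= inE => /eqP ->.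
rewrite coars_cons // => /flatten_mapP [l' _]; rewrite !inE => /orP[] /eqP -> //.
Qed.

Lemma coars_idx y l : is_index y -> l \in coarsenings y -> is_index l.
Proof.
elim: y l => [|a y IH] l; first by rewrite /= inE => _ /eqP ->.
move=> /andP[ha hy]; case: (eqVneq y [::]) => [->|ny].
  by rewrite /= inE => /eqP ->; rewrite /is_index /= ha.
rewrite coars_cons // => /flatten_mapP [l' hl']; rewrite !inE => /orP[] /eqP ->.
  by rewrite /is_index /= ha; exact: (IH l' hy hl').
have := IH l' hy hl'; case: l' {hl'} => [|c l'] /=.
  by rewrite /is_index /= addn0 ha.
by move=> /andP[_ h]; rewrite /is_index /= ltn_addr.
Qed.

Lemma A_lem (A : zmodType) (Y : seq nat -> A) a x y : y != [::] ->
  Tsum Y (a :: x) y = Wsum Y x (a :: y) + Wsum Y (a :: x) y.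
Proof.
move=> ny; rewrite /Wsum /Tsum coars_cons // big_flatten big_map -big_split /=.
apply: eq_big_seq => l hl; have := coars_nil hl ny.
case: l {hl} => [|c l] // _.
by rewrite big_cons big_seq1 /= wsum_cc addrAC.
Qed.

Lemma B1_lem (A : zmodType) (Y : seq nat -> A) a x :
  Tsum Y (a :: x) [::] = Wsum Y x [:: a].
Proof. by rewrite /Tsum /Wsum /= !big_seq1 /= !wsumx0. Qed.

Lemma B2_lem (A : zmodType) (Y : seq nat -> A) y : y != [::] ->
  Tsum Y [::] y = Wsum Y [::] y.
Proof.
move=> ny; apply: eq_big_seq => l hl; have := coars_nil hl ny.
by case: l {hl} => [|c l] // _; rewrite !wsum0x.
Qed.

Lemma tele (A : comNzRingType) (Y : seq nat -> A) k :
  \sum_(i < (size k).+1) (-1) ^+ i * Tsum Y (rev (take i k)) (drop i k)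
  = if size k == 0%N then Y [::] else 0.
Proof.
case: (eqVneq k [::]) => [->|nk].
  by rewrite big_ord_recl big_ord0 /= /Tsum /= big_seq1 wsum0x mul1r addr0.
have r0 : (0 < size k)%N by case: k nk.
rewrite (negbTE (lt0n_neq0 r0)).
set r := size k.
pose g i := Wsum Y (rev (take i k)) (drop i k).
pose h i := if (i < r)%N then g i else 0.
have f0 : Tsum Y (rev (take 0 k)) (drop 0 k) = h 0%N.
  by rewrite /h r0 /g take0 drop0 /= B2_lem.
have fS : forall j, (j < r)%N ->
    Tsum Y (rev (take j.+1 k)) (drop j.+1 k) = h j + h j.+1.
  move=> j hj; rewrite /h hj /g (take_nth 0%N hj) rev_rcons (drop_nth 0%N hj).
  case: (ltnP j.+1 r) => hj1.
    rewrite A_lem ?(drop_nth 0%N hj1) //.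
  have hd : drop j.+1 k = [::] by apply: drop_oversize.
  by rewrite hd B1_lem addr0.
rewrite big_ord_recl f0 expr0 mul1r.
pose u i := (-1) ^+ i * h i.
transitivity (h 0%N + \sum_(0 <= i < r) (u i.+1 - u i)).
  congr (_ + _); rewrite big_mkord; apply: eq_bigr => i _.
  rewrite fS //= /u /bump add1n mulrDr addrC; congr (_ + _).
  by rewrite exprS mulN1r mulNr.
rewrite telescope_sumr // /u /h ltnn mulr0 add0r expr0 mul1r.
by rewrite subrr.
Qed.
Module MzvNil.
Import numFieldNormedType.Exports.
Lemma mzv_nil (R : realType) : mzv R [::] = 1.
Proof. by rewrite /mzv /zeta_trunc /=; apply: lim_cst. Qed.
End MzvNil.

Theorem corollary2p6 (R : realType) (Z : seq nat -> {poly R})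
  (HZ : harmonic_regularization Z) (k : seq nat) (hk : is_index k) (m : nat) :
  \sum_(i < (size k).+1)
     (-1) ^+ i * pmul (zeta_shift Z (rev (take i k)))
                      (zeta_shift_star Z (drop i k)) m
  = ((size k == 0%N) && (m == 0%N))%:R.
Proof.
case: HZ => Hadm _ Hmul.
have Z0 : Z [::] = 1 by rewrite Hadm // MzvNil.mzv_nil.
pose Yz w := zeta_shift Z w m.
have E : forall i : 'I_(size k).+1,
    pmul (zeta_shift Z (rev (take i k))) (zeta_shift_star Z (drop i k)) m
    = Tsum Yz (rev (take i k)) (drop i k).
  move=> i; have hk2 : all (fun x => (0 < x)%N) (take i k ++ drop i k) by rewrite cat_take_drop.
  rewrite all_cat in hk2; case/andP: hk2 => h1 h2.
  transitivity (\sum_(l <- coarsenings (drop i k))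
      pmul (zeta_shift Z (rev (take i k))) (zeta_shift Z l) m).
    rewrite /zeta_shift_star /pmul; under eq_bigr do rewrite mulr_sumr.
    by rewrite exchange_big.
  apply: eq_big_seq => l hl; rewrite Hhom //.
    by rewrite /is_index all_rev.
  exact: coars_idx hl.
under eq_bigr do rewrite E.
rewrite tele; case: eqP => _ //=.
rewrite /Yz zs_G G_nil; clear E Yz; case: m => [|m'] /=.
  by rewrite expr0 mul1r Z0.
by rewrite mulr0.
Qed.
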